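(* Fix real parameters $a\neq 0$, $b>0$, $c>0$ and $0<\theta<c$, let $P(x,y)=\tfrac12+(x-y)\bigl(c-b(x+y)+axy\bigr)$, $\kappa=b/a$, $\zeta=\frac{b^2-a(c-\theta)}{a^2}$. For an opponent effort $y\ge 0$ with $ay<b$, let $$x^{BR}(y)=\frac{ay^2-(c-\theta)}{2(ay-b)}$$ denote the interior best response, i.e. the unique maximizer over $x\in\mathbb R$ of the strictly concave function $x\mapsto P(x,y)-\theta x$. Under empowerment ($a<0$) the condition $ay<b$ holds for every $y\ge 0$, and $x^{BR}$ is convex on $[0,\infty)$. Under suppression ($a>0$) the condition restricts $y$ to $[0,\kappa)$, and on $[0,\kappa)$ the function $x^{BR}$ is concave if $\zeta>0$ and convex if $\zeta<0$. The change of curvature occurs exactly at $\zeta=0$.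
   Context: $x^{BR}(y)$ is viewed as a function of the opponent's effort $y$; convexity/concavity refer to the sign of $d^2x^{BR}/dy^2$. *)

(* Defs.v *)
From Stdlib Require Import Reals.
From Coquelicot Require Import Coquelicot.
Open Scope R_scope.

Definition Pwin (a b c x y : R) : R :=
  1/2 + (x - y) * (c - b * (x + y) + a * x * y).

Definition payoff (a b c theta x y : R) : R := Pwin a b c x y - theta * x.

Definition kappa (a b : R) : R := b / a.

Definition zeta (a b c theta : R) : R := (b ^ 2 - a * (c - theta)) / a ^ 2.

Definition xBR (a b c theta y : R) : R :=
  (a * y ^ 2 - (c - theta)) / (2 * (a * y - b)).

(* Main.v *)
Require Import Defs.
From Stdlib Require Import Reals Lra.
From Coquelicot Require Import Coquelicot.
Open Scope R_scope.
Lemma loc (a b y : R) : a*y - b < 0 -> locally y (fun z => a*z - b < 0).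
Proof.
intros H.
assert (He : 0 < (b - a*y)/(Rabs a + 1)).
{ apply Rdiv_lt_0_compat; [lra| pose proof (Rabs_pos a); lra]. }
exists (mkposreal _ He). intros z Hz. cbn in Hz.
unfold ball in Hz; cbn in Hz; unfold AbsRing_ball, abs, minus, plus, opp in Hz; cbn in Hz.
assert (Rabs (a*z - a*y) <= Rabs a * Rabs (z + - y)).
{ rewrite <- Rabs_mult. right; f_equal; ring. }
assert (Rabs a * Rabs (z + - y) <= Rabs a * ((b - a*y)/(Rabs a + 1))).
{ apply Rmult_le_compat_l; [apply Rabs_pos| lra]. }
assert (Rabs a * ((b - a*y)/(Rabs a + 1)) < (b - a*y)).
{ pose proof (Rabs_pos a). apply (Rmult_lt_reg_r (Rabs a + 1)); [lra|].
  field_simplify; [nra| lra]. }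
pose proof (Rle_abs (a*z - a*y)). lra.
Qed.

Lemma d1 (a b c theta z : R) : a*z - b <> 0 ->
  is_derive (xBR a b c theta) z (1/2 - (b^2 - a*(c-theta))/(2*(a*z-b)^2)).
Proof.
intros H. unfold xBR. auto_derive.
- intro E; apply H; lra.
- field. exact H.
Qed.

Lemma d2 (a b c theta y : R) : a*y - b < 0 ->
  is_derive_n (xBR a b c theta) 2 y (a*(b^2 - a*(c-theta))/(a*y-b)^3).
Proof.
intros H. simpl.
apply is_derive_ext_loc with (f := fun z => 1/2 - (b^2 - a*(c-theta))/(2*(a*z-b)^2)).
- generalize (loc a b y H). apply filter_imp. intros z Hz.
  symmetry. apply is_derive_unique. apply d1. lra.
- auto_derive.
  + intro E. assert (a*y-b = 0) by nra. lra.
  + field. lra.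
Qed.

Lemma sgn (a K d : R) : d < 0 ->
  a * K / d ^ 3 = - (a*K) / ((-d)^3) /\ 0 < (-d)^3.
Proof.
intros H. split.
- field. lra.
- apply pow_lt. lra.
Qed.

Theorem corollary1 (a b c theta : R)
  (ha : a <> 0) (hb : 0 < b) (hc : 0 < c) (ht0 : 0 < theta) (htc : theta < c) :
  (forall y, 0 <= y -> a * y < b ->
     forall x, x <> xBR a b c theta y ->
       payoff a b c theta x y < payoff a b c theta (xBR a b c theta y) y) /\
  (a < 0 ->
     (forall y, 0 <= y -> a * y < b) /\
     (forall y, 0 <= y ->
        ex_derive_n (xBR a b c theta) 2 y /\ 0 < Derive_n (xBR a b c theta) 2 y)) /\
  (0 < a ->
     (forall y, 0 <= y -> (a * y < b <-> y < kappa a b)) /\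
     (0 < zeta a b c theta -> forall y, 0 <= y -> y < kappa a b ->
        ex_derive_n (xBR a b c theta) 2 y /\ Derive_n (xBR a b c theta) 2 y < 0) /\
     (zeta a b c theta < 0 -> forall y, 0 <= y -> y < kappa a b ->
        ex_derive_n (xBR a b c theta) 2 y /\ 0 < Derive_n (xBR a b c theta) 2 y) /\
     (zeta a b c theta = 0 -> forall y, 0 <= y -> y < kappa a b ->
        ex_derive_n (xBR a b c theta) 2 y /\ Derive_n (xBR a b c theta) 2 y = 0)).
Proof.
assert (Hd : forall y, a*y - b < 0 -> ex_derive_n (xBR a b c theta) 2 y /\
   Derive_n (xBR a b c theta) 2 y = a*(b^2 - a*(c-theta))/(a*y-b)^3).
{ intros y Hy. pose proof (d2 a b c theta y Hy) as D. split.
  - exists (a*(b^2 - a*(c-theta))/(a*y-b)^3). exact D.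
  - apply is_derive_n_unique. exact D. }
assert (HK : b^2 - a*(c-theta) = zeta a b c theta * a^2).
{ unfold zeta. field. exact ha. }
split; [|split].
- intros y Hy Hay x Hx.
  set (xs := xBR a b c theta y).
  assert (E : payoff a b c theta x y - payoff a b c theta xs y = (a*y-b)*(x-xs)^2).
  { unfold xs, payoff, Pwin, xBR. field. lra. }
  assert (0 < (x-xs)^2).
  { assert (x - xs <> 0) by (intro E0; apply Hx; fold xs; lra).
    simpl. rewrite Rmult_1_r. destruct (Rlt_or_le 0 (x-xs)); nra. }
  nra.
- intros Ha. assert (Hab : forall y, 0 <= y -> a*y < b) by (intros; nra).
  split; [exact Hab|].
  intros y Hy. specialize (Hab y Hy). destruct (Hd y ltac:(lra)) as [H1 H2].
  split; [exact H1|]. rewrite H2.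
  destruct (sgn a (b^2 - a*(c-theta)) (a*y-b) ltac:(lra)) as [E P]. rewrite E.
  apply Rdiv_lt_0_compat; [|exact P]. assert (0 < b^2) by (simpl; nra). assert (0 < b^2 - a*(c-theta)) by nra. nra.
- intros Ha.
  assert (Hk : forall y, (a*y < b <-> y < kappa a b)).
  { intros y. unfold kappa. split; intro H.
    - apply (Rmult_lt_reg_l a); [exact Ha|]. field_simplify; lra.
    - apply (Rmult_lt_compat_l a) in H; [|exact Ha]. field_simplify in H; lra. }
  assert (Hp : 0 < a^2) by (apply pow_lt; exact Ha).
  split; [intros; apply Hk|]. split; [|split].
  + intros Hz y Hy Hyk. apply Hk in Hyk. destruct (Hd y ltac:(lra)) as [H1 H2].
    split; [exact H1|]. rewrite H2.
    destruct (sgn a (b^2 - a*(c-theta)) (a*y-b) ltac:(lra)) as [E P]. rewrite E.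
    rewrite HK. apply Ropp_lt_cancel. rewrite Ropp_0, <- Rdiv_opp_l, Ropp_involutive.
    apply Rdiv_lt_0_compat; [|exact P]. apply Rmult_lt_0_compat; [exact Ha|].
    apply Rmult_lt_0_compat; assumption.
  + intros Hz y Hy Hyk. apply Hk in Hyk. destruct (Hd y ltac:(lra)) as [H1 H2].
    split; [exact H1|]. rewrite H2.
    destruct (sgn a (b^2 - a*(c-theta)) (a*y-b) ltac:(lra)) as [E P]. rewrite E.
    rewrite HK. apply Rdiv_lt_0_compat; [|exact P]. assert (0 < a*a^2) by (apply Rmult_lt_0_compat; assumption). nra.
  + intros Hz y Hy Hyk. apply Hk in Hyk. destruct (Hd y ltac:(lra)) as [H1 H2].
    split; [exact H1|]. rewrite H2, HK, Hz. field. lra.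
Qed.
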